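(* There exist flexible sphere-type polyhedra in the Minkowski 3-space $\mathbf{R}^3_1$.
   Context: $\mathbf{R}^3_1$ is $\mathbf{R}^3$ with scalar product $(x,y)=x_1y_1+x_2y_2-x_3y_3$ and length $|x|=\sqrt{(x,x)}$ (nonnegative real or $i$ times a positive real). A polyhedron is a continuous map $P:\Sigma\to\mathbf{R}^3_1$, where $\Sigma$ is a connected 2-dimensional simplicial complex that is a manifold, such that $P$ is affine and injective on each simplex; it is sphere-type if $\Sigma$ is homeomorphic to the 2-sphere. $P$ is flexible if there is a family of polyhedra $P_t:\Sigma\to\mathbf{R}^3_1$, $0\le t\le1$, analytic in $t$, with (i) $P_0=P$; (ii) for every edge $e$ of $\Sigma$ the length of $P_t(e)$ is independent of $t$; (iii) there exist vertices $v_1,v_2$ of $\Sigma$ such that $|P_t(v_1)-P_t(v_2)|$ is not constant in $t$. (The polyhedra need not be embedded.) *)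

(* Defs.v *)
From Stdlib Require Import Reals List.
From Coquelicot Require Import Coquelicot.
Open Scope R_scope.

Definition R3 : Type := (R * R * R)%type.
Definition r3x (x : R3) : R := fst (fst x).
Definition r3y (x : R3) : R := snd (fst x).
Definition r3z (x : R3) : R := snd x.
Definition r3sub (x y : R3) : R3 :=
  (r3x x - r3x y, r3y x - r3y y, r3z x - r3z y).
Definition r3add (x y : R3) : R3 :=
  (r3x x + r3x y, r3y x + r3y y, r3z x + r3z y).
Definition r3scal (a : R) (x : R3) : R3 := (a * r3x x, a * r3y x, a * r3z x).
Definition r3zero : R3 := (0, 0, 0).

Definition mink_dot (x y : R3) : R := r3x x * r3x y + r3y x * r3y y - r3z x * r3z y.

Definition mink_len (x : R3) : C :=
  let q := mink_dot x x in
  if Rle_dec 0 q then (sqrt q, 0) else (0, sqrt (- q)).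

(** Euclidean distance on R^3 (for the topology of the round sphere). *)
Definition eucl3 (x y : R3) : R :=
  sqrt ((r3x x - r3x y)^2 + (r3y x - r3y y)^2 + (r3z x - r3z y)^2).
Definition unit_sphere (x : R3) : Prop := r3x x ^ 2 + r3y x ^ 2 + r3z x ^ 2 = 1.

Fixpoint sumR (n : nat) (f : nat -> R) : R :=
  match n with O => 0 | S m => sumR m f + f m end.
Fixpoint sumR3 (n : nat) (f : nat -> R3) : R3 :=
  match n with O => r3zero | S m => r3add (sumR3 m f) (f m) end.

(** Points of the geometric realization are barycentric
   coordinate functions nat -> R. *)
Definition tri2 : Type := (nat * nat * nat)%type.
Definition tA (f : tri2) : nat := fst (fst f).
Definition tB (f : tri2) : nat := snd (fst f).
Definition tC (f : tri2) : nat := snd f.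

Definition in_triangle (f : tri2) (v : nat) : Prop :=
  v = tA f \/ v = tB f \/ v = tC f.

Definition simplicial_complex2 (n : nat) (faces : list tri2) : Prop :=
  faces <> nil /\
  (forall f, In f faces ->
     (tA f < n)%nat /\ (tB f < n)%nat /\ (tC f < n)%nat /\
     tA f <> tB f /\ tB f <> tC f /\ tA f <> tC f) /\
  (forall v, (v < n)%nat -> exists f, In f faces /\ in_triangle f v).

Definition in_simplex (f : tri2) (x : nat -> R) : Prop :=
  (forall v, ~ in_triangle f v -> x v = 0) /\
  0 <= x (tA f) /\ 0 <= x (tB f) /\ 0 <= x (tC f) /\
  x (tA f) + x (tB f) + x (tC f) = 1.

Definition realization (faces : list tri2) (x : nat -> R) : Prop :=
  exists f, In f faces /\ in_simplex f x.

Definition distn (n : nat) (x y : nat -> R) : R :=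
  sqrt (sumR n (fun v => (x v - y v) ^ 2)).

Definition sphere_type (n : nat) (faces : list tri2) : Prop :=
  exists (h : (nat -> R) -> R3) (g : R3 -> (nat -> R)),
    (forall x, realization faces x -> unit_sphere (h x)) /\
    (forall y, unit_sphere y -> realization faces (g y)) /\
    (forall x, realization faces x -> forall v, g (h x) v = x v) /\
    (forall y, unit_sphere y -> h (g y) = y) /\
    (forall x, realization faces x -> forall eps, 0 < eps -> exists delta, 0 < delta /\
       forall x', realization faces x' -> distn n x x' < delta -> eucl3 (h x) (h x') < eps) /\
    (forall y, unit_sphere y -> forall eps, 0 < eps -> exists delta, 0 < delta /\
       forall y', unit_sphere y' -> eucl3 y y' < delta -> distn n (g y) (g y') < eps).

(** * Polyhedra
   A continuous map Sigma -> R^3_1 affine on each simplex is determined by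
   the images p v of the vertices: it is x |-> sum_v x_v p_v. *)
Definition poly_map (n : nat) (p : nat -> R3) (x : nat -> R) : R3 :=
  sumR3 n (fun v => r3scal (x v) (p v)).

Definition is_polyhedron (n : nat) (faces : list tri2) (p : nat -> R3) : Prop :=
  forall f, In f faces -> forall x y, in_simplex f x -> in_simplex f y ->
    poly_map n p x = poly_map n p y -> forall v, x v = y v.

Definition is_edge (faces : list tri2) (a b : nat) : Prop :=
  a <> b /\ exists f, In f faces /\ in_triangle f a /\ in_triangle f b.

Definition analytic_on_01 (u : R -> R) : Prop :=
  forall t0, 0 <= t0 <= 1 -> exists r, 0 < r /\ exists a : nat -> R,
    forall t, 0 <= t <= 1 -> Rabs (t - t0) < r -> is_pseries a (t - t0) (u t).

Definition flexible (n : nat) (faces : list tri2) (p : nat -> R3) : Prop :=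
  exists P : R -> nat -> R3,
    (forall t, 0 <= t <= 1 -> is_polyhedron n faces (P t)) /\
    (forall v, (v < n)%nat ->
       analytic_on_01 (fun t => r3x (P t v)) /\
       analytic_on_01 (fun t => r3y (P t v)) /\
       analytic_on_01 (fun t => r3z (P t v))) /\
    (forall v, (v < n)%nat -> P 0 v = p v) /\
    (forall a b, is_edge faces a b -> forall t, 0 <= t <= 1 ->
       mink_len (r3sub (P t a) (P t b)) = mink_len (r3sub (P 0 a) (P 0 b))) /\
    (exists v1 v2, (v1 < n)%nat /\ (v2 < n)%nat /\
       exists t, 0 <= t <= 1 /\
         mink_len (r3sub (P t v1) (P t v2)) <> mink_len (r3sub (P 0 v1) (P 0 v2))).

(* Main.v *)
Require Import Defs.
From Stdlib Require Import Reals List Lra Lia.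
From Coquelicot Require Import Coquelicot.
Open Scope R_scope.

Definition cont {A : Type} (d : A -> A -> R) (F : A -> R) (a : A) : Prop :=
  forall eps, 0 < eps -> exists delta, 0 < delta /\
    forall b, d a b < delta -> Rabs (F b - F a) < eps.

Lemma cont_const {A} d (c : R) (a : A) : cont d (fun _ => c) a.
Proof. intros e He. exists 1. split; [lra|]. intros b _.
  rewrite Rminus_diag, Rabs_R0. exact He. Qed.

Lemma cont_plus {A} d (F G : A -> R) a :
  cont d F a -> cont d G a -> cont d (fun x => F x + G x) a.
Proof.
  intros HF HG e He.
  destruct (HF (e/2)) as [d1 [Hd1 H1]]; [lra|].
  destruct (HG (e/2)) as [d2 [Hd2 H2]]; [lra|].
  exists (Rmin d1 d2). split; [apply Rmin_pos; lra|].
  intros b Hb.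
  assert (A1 := H1 b ltac:(apply Rlt_le_trans with (1:=Hb); apply Rmin_l)).
  assert (A2 := H2 b ltac:(apply Rlt_le_trans with (1:=Hb); apply Rmin_r)).
  replace (F b + G b - (F a + G a)) with ((F b - F a) + (G b - G a)) by ring.
  apply Rle_lt_trans with (1 := Rabs_triang _ _). lra.
Qed.

Lemma cont_comp {A} d (F : A -> R) (f : R -> R) a :
  cont d F a -> continuity_pt f (F a) -> cont d (fun x => f (F x)) a.
Proof.
  intros HF Hf e He.
  destruct (Hf e He) as [al [Hal Hal2]].
  destruct (HF al Hal) as [dl [Hdl Hd]].
  exists dl. split; [exact Hdl|]. intros b Hb.
  destruct (Req_dec (F b) (F a)) as [E|E].
  - rewrite E, Rminus_diag, Rabs_R0. exact He.
  - apply (Hal2 (F b)). split.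
    + split; [exact I| congruence].
    + exact (Hd b Hb).
Qed.

Lemma cpt_of_deriv (f : R -> R) x : ex_derive f x -> continuity_pt f x.
Proof. intro H. apply continuity_pt_filterlim. apply (ex_derive_continuous f x H). Qed.

Lemma cont_opp {A} d (F : A -> R) a : cont d F a -> cont d (fun x => - F x) a.
Proof. intro H. apply (cont_comp d F (fun z => - z)); auto.
  apply cpt_of_deriv. auto_derive. auto. Qed.

Lemma cont_minus {A} d (F G : A -> R) a :
  cont d F a -> cont d G a -> cont d (fun x => F x - G x) a.
Proof. intros HF HG. apply (cont_plus d F (fun x => - G x)); auto. apply cont_opp; auto. Qed.

Lemma cont_pow2 {A} d (F : A -> R) a : cont d F a -> cont d (fun x => F x ^ 2) a.
Proof. intro H. apply (cont_comp d F (fun z => z ^ 2)); auto.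
  apply cpt_of_deriv. auto_derive. auto. Qed.

Lemma cont_ext {A} d (F G : A -> R) a : (forall x, F x = G x) -> cont d F a -> cont d G a.
Proof. intros E H e He. destruct (H e He) as [dl [H1 H2]]. exists dl. split; auto.
  intros b Hb. rewrite <- !E. auto. Qed.

Lemma cont_mult {A} d (F G : A -> R) a :
  cont d F a -> cont d G a -> cont d (fun x => F x * G x) a.
Proof.
  intros HF HG.
  apply (cont_ext d (fun x => ((F x + G x) ^ 2 - (F x - G x) ^ 2) * / 4)).
  { intro x. field. }
  apply (cont_comp d (fun x => (F x + G x) ^ 2 - (F x - G x) ^ 2) (fun z => z * / 4)).
  - apply cont_minus; apply cont_pow2; [apply cont_plus|apply cont_minus]; auto.
  - apply cpt_of_deriv. auto_derive. auto.
Qed.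

Lemma cont_inv {A} d (F : A -> R) a : cont d F a -> F a <> 0 -> cont d (fun x => / F x) a.
Proof. intros H Hn. apply (cont_comp d F (fun z => / z)); auto.
  apply cpt_of_deriv. auto_derive. auto. Qed.

Lemma cont_sqrt {A} d (F : A -> R) a : cont d F a -> 0 <= F a -> cont d (fun x => sqrt (F x)) a.
Proof. intros H Hn. apply (cont_comp d F sqrt); auto. apply continuity_pt_sqrt; auto. Qed.

Lemma cont_abs {A} d (F : A -> R) a : cont d F a -> cont d (fun x => Rabs (F x)) a.
Proof. intros H. apply (cont_comp d F Rabs); auto. apply Rcontinuity_abs. Qed.

Lemma abs_sqrt_sq (d : R) : Rabs d = sqrt (d ^ 2).
Proof. rewrite <- sqrt_Rsqr_abs. unfold Rsqr. f_equal. ring. Qed.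

Lemma cont_proj6 (v : nat) (a : nat -> R) : (v < 6)%nat -> cont (distn 6) (fun x => x v) a.
Proof.
  intros Hv e He. exists e. split; [exact He|]. intros b Hb.
  apply Rle_lt_trans with (2 := Hb). unfold distn.
  rewrite Rabs_minus_sym, abs_sqrt_sq. apply sqrt_le_1_alt.
  cbn [sumR].
  pose proof (pow2_ge_0 (a 0%nat - b 0%nat)). pose proof (pow2_ge_0 (a 1%nat - b 1%nat)).
  pose proof (pow2_ge_0 (a 2%nat - b 2%nat)). pose proof (pow2_ge_0 (a 3%nat - b 3%nat)).
  pose proof (pow2_ge_0 (a 4%nat - b 4%nat)). pose proof (pow2_ge_0 (a 5%nat - b 5%nat)).
  destruct v as [|[|[|[|[|[|v]]]]]]; try lia; lra.
Qed.

Lemma sq_le3 (p q r : R) : p ^ 2 <= p ^ 2 + q ^ 2 + r ^ 2 /\ q ^ 2 <= p ^ 2 + q ^ 2 + r ^ 2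
  /\ r ^ 2 <= p ^ 2 + q ^ 2 + r ^ 2.
Proof. nra. Qed.

Lemma cont_r3x (a : R3) : cont eucl3 r3x a.
Proof.
  intros e He. exists e. split; [exact He|]. intros b Hb.
  apply Rle_lt_trans with (2 := Hb). unfold eucl3.
  rewrite Rabs_minus_sym, abs_sqrt_sq. apply sqrt_le_1_alt. apply sq_le3.
Qed.
Lemma cont_r3y (a : R3) : cont eucl3 r3y a.
Proof.
  intros e He. exists e. split; [exact He|]. intros b Hb.
  apply Rle_lt_trans with (2 := Hb). unfold eucl3.
  rewrite Rabs_minus_sym, abs_sqrt_sq. apply sqrt_le_1_alt. apply sq_le3.
Qed.
Lemma cont_r3z (a : R3) : cont eucl3 r3z a.
Proof.
  intros e He. exists e. split; [exact He|]. intros b Hb.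
  apply Rle_lt_trans with (2 := Hb). unfold eucl3.
  rewrite Rabs_minus_sym, abs_sqrt_sq. apply sqrt_le_1_alt. apply sq_le3.
Qed.

Ltac cont_tac :=
  repeat first
    [ apply cont_const
    | apply cont_plus
    | apply cont_minus
    | apply cont_mult
    | apply cont_opp
    | apply cont_pow2
    | apply cont_abs
    | apply cont_inv
    | apply cont_sqrt
    | apply cont_r3x | apply cont_r3y | apply cont_r3z
    | (apply cont_proj6; lia) ].

Lemma sqrt3_small (p q r e : R) : 0 < e -> Rabs p < e/2 -> Rabs q < e/2 -> Rabs r < e/2 ->
  sqrt (p ^ 2 + q ^ 2 + r ^ 2) < e.
Proof.
  intros He Hp Hq Hr. apply Rabs_def2 in Hp, Hq, Hr.
  rewrite <- (sqrt_pow2 e) by lra. apply sqrt_lt_1_alt. nra.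
Qed.

Lemma sqrt6_small (p0 p1 p2 p3 p4 p5 e : R) : 0 < e -> Rabs p0 < e/3 -> Rabs p1 < e/3 ->
  Rabs p2 < e/3 -> Rabs p3 < e/3 -> Rabs p4 < e/3 -> Rabs p5 < e/3 ->
  sqrt (0 + p0 ^ 2 + p1 ^ 2 + p2 ^ 2 + p3 ^ 2 + p4 ^ 2 + p5 ^ 2) < e.
Proof.
  intros He H0 H1 H2 H3 H4 H5. apply Rabs_def2 in H0, H1, H2, H3, H4, H5.
  rewrite <- (sqrt_pow2 e) by lra. apply sqrt_lt_1_alt. nra.
Qed.

Definition faces : list tri2 :=
  ((0,2,4) :: (0,2,5) :: (0,3,4) :: (0,3,5) :: (1,2,4) :: (1,2,5) :: (1,3,4) :: (1,3,5) :: nil)%nat.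

Definition pos (a : R) := (a + Rabs a) / 2.
Definition neg (a : R) := (Rabs a - a) / 2.
Definition L1 (y : R3) := Rabs (r3x y) + Rabs (r3y y) + Rabs (r3z y).
Definition gmap (y : R3) (v : nat) : R :=
  match v with
  | 0 => pos (r3x y) / L1 y | 1 => neg (r3x y) / L1 y
  | 2 => pos (r3y y) / L1 y | 3 => neg (r3y y) / L1 y
  | 4 => pos (r3z y) / L1 y | 5 => neg (r3z y) / L1 y
  | _ => 0 end.
Definition Nn (x : nat -> R) := sqrt ((x 0%nat - x 1%nat) ^ 2 + (x 2%nat - x 3%nat) ^ 2 + (x 4%nat - x 5%nat) ^ 2).
Definition hmap (x : nat -> R) : R3 :=
  ((x 0%nat - x 1%nat) / Nn x, (x 2%nat - x 3%nat) / Nn x, (x 4%nat - x 5%nat) / Nn x).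

Lemma real_facts x : realization faces x ->
  0 <= x 0%nat /\ 0 <= x 1%nat /\ 0 <= x 2%nat /\ 0 <= x 3%nat /\ 0 <= x 4%nat /\ 0 <= x 5%nat /\
  x 0%nat * x 1%nat = 0 /\ x 2%nat * x 3%nat = 0 /\ x 4%nat * x 5%nat = 0 /\
  x 0%nat + x 1%nat + x 2%nat + x 3%nat + x 4%nat + x 5%nat = 1 /\
  (forall v, (6 <= v)%nat -> x v = 0).
Proof.
  intros [f [Hin Hs]].
  simpl in Hin.
  destruct Hs as (Hz & H1 & H2 & H3 & Hsum).
  assert (Hz' : forall v, ~ in_triangle f v -> x v = 0) by exact Hz.
  repeat destruct Hin as [<-|Hin]; try contradiction;
  unfold tA, tB, tC in *; simpl in *;
  (assert (Hb : forall v, (6 <= v)%nat -> x v = 0) by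
     (intros v Hv; apply Hz; unfold in_triangle, tA, tB, tC; simpl; lia));
  repeat (match goal with
          | |- context[x ?v] =>
             match goal with
             | H : x v = 0 |- _ => fail 1
             | _ => assert (x v = 0) by (apply Hz; unfold in_triangle, tA, tB, tC; simpl; lia)
             end
          end);
  repeat split; try assumption; try lra; try nra.
Qed.

Lemma axis (a b : R) : 0 <= a -> 0 <= b -> a * b = 0 ->
  Rabs (a - b) = a + b /\ pos (a - b) = a /\ neg (a - b) = b.
Proof.
  intros Ha Hb Hab. unfold pos, neg.
  destruct (Rmult_integral _ _ Hab) as [E|E]; rewrite E.
  - rewrite Rabs_left1 by lra. repeat split; field.
  - rewrite Rabs_pos_eq by lra. repeat split; field.
Qed.

Lemma Rabs_divpos (a c : R) : 0 < c -> Rabs (a / c) = Rabs a / c.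
Proof. intro Hc. unfold Rdiv. rewrite Rabs_mult, Rabs_inv, (Rabs_pos_eq c) by lra. reflexivity. Qed.

Lemma pos_divpos (a c : R) : 0 < c -> pos (a / c) = pos a / c.
Proof. intro Hc. unfold pos. rewrite Rabs_divpos by auto. field. lra. Qed.
Lemma neg_divpos (a c : R) : 0 < c -> neg (a / c) = neg a / c.
Proof. intro Hc. unfold neg. rewrite Rabs_divpos by auto. field. lra. Qed.

Lemma Nn_sq_pos x : realization faces x ->
  0 < (x 0%nat - x 1%nat) ^ 2 + (x 2%nat - x 3%nat) ^ 2 + (x 4%nat - x 5%nat) ^ 2.
Proof.
  intro H. destruct (real_facts x H) as (h0&h1&h2&h3&h4&h5&p1&p2&p3&s&_).
  destruct (axis _ _ h0 h1 p1) as [a1 _]. destruct (axis _ _ h2 h3 p2) as [a2 _].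
  destruct (axis _ _ h4 h5 p3) as [a3 _].
  destruct (Rle_lt_dec ((x 0%nat - x 1%nat) ^ 2 + (x 2%nat - x 3%nat) ^ 2 + (x 4%nat - x 5%nat) ^ 2) 0) as [Hl|Hl]; [|exact Hl].
  exfalso.
  pose proof (pow2_ge_0 (x 0%nat - x 1%nat)). pose proof (pow2_ge_0 (x 2%nat - x 3%nat)).
  pose proof (pow2_ge_0 (x 4%nat - x 5%nat)).
  assert (e1 : x 0%nat - x 1%nat = 0) by nra.
  assert (e2 : x 2%nat - x 3%nat = 0) by nra.
  assert (e3 : x 4%nat - x 5%nat = 0) by nra.
  rewrite e1, Rabs_R0 in a1. rewrite e2, Rabs_R0 in a2. rewrite e3, Rabs_R0 in a3. lra.
Qed.

Lemma Nn_pos x : realization faces x -> 0 < Nn x.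
Proof. intro H. unfold Nn. apply sqrt_lt_R0. apply Nn_sq_pos; auto. Qed.

Lemma h_sphere x : realization faces x -> unit_sphere (hmap x).
Proof.
  intro H. pose proof (Nn_pos x H) as HN. pose proof (Nn_sq_pos x H) as HS.
  assert (E : Nn x ^ 2 = (x 0%nat - x 1%nat) ^ 2 + (x 2%nat - x 3%nat) ^ 2 + (x 4%nat - x 5%nat) ^ 2)
    by (unfold Nn; apply pow2_sqrt; lra).
  unfold unit_sphere, hmap, r3x, r3y, r3z; simpl.
  transitivity (((x 0%nat - x 1%nat) ^ 2 + (x 2%nat - x 3%nat) ^ 2 + (x 4%nat - x 5%nat) ^ 2) / Nn x ^ 2).
  - field. lra.
  - rewrite E. field. lra.
Qed.

Lemma L1_pos y : unit_sphere y -> 0 < L1 y.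
Proof.
  unfold unit_sphere, L1. intro H.
  pose proof (Rabs_pos (r3x y)). pose proof (Rabs_pos (r3y y)). pose proof (Rabs_pos (r3z y)).
  destruct (Rle_lt_dec (Rabs (r3x y) + Rabs (r3y y) + Rabs (r3z y)) 0) as [Hl|Hl]; [|exact Hl].
  exfalso.
  assert (Rabs (r3x y) = 0) by lra. assert (Rabs (r3y y) = 0) by lra. assert (Rabs (r3z y) = 0) by lra.
  assert (e1 : r3x y = 0) by (apply Rabs_eq_0; auto).
  assert (e2 : r3y y = 0) by (apply Rabs_eq_0; auto).
  assert (e3 : r3z y = 0) by (apply Rabs_eq_0; auto).
  rewrite e1, e2, e3 in H. lra.
Qed.

Lemma pos_nn a : 0 <= a -> pos a = a /\ neg a = 0.
Proof. intro. unfold pos, neg. rewrite Rabs_pos_eq by auto. split; field. Qed.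
Lemma neg_nn a : ~ 0 <= a -> pos a = 0 /\ neg a = - a.
Proof. intro. unfold pos, neg. rewrite Rabs_left by lra. split; field. Qed.

Lemma g_real y : unit_sphere y -> realization faces (gmap y).
Proof.
  intro Hy. pose proof (L1_pos y Hy) as HL.
  exists ((if Rle_dec 0 (r3x y) then 0 else 1), (if Rle_dec 0 (r3y y) then 2 else 3),
          (if Rle_dec 0 (r3z y) then 4 else 5))%nat.
  unfold L1 in *.
  destruct (Rle_dec 0 (r3x y)) as [h1|h1]; destruct (Rle_dec 0 (r3y y)) as [h2|h2];
  destruct (Rle_dec 0 (r3z y)) as [h3|h3];
  (split; [simpl; tauto|]);
  first [pose proof (pos_nn _ h1) as q1 | pose proof (neg_nn _ h1) as q1];
  first [pose proof (pos_nn _ h2) as q2 | pose proof (neg_nn _ h2) as q2];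
  first [pose proof (pos_nn _ h3) as q3 | pose proof (neg_nn _ h3) as q3];
  destruct q1 as [q1 q1']; destruct q2 as [q2 q2']; destruct q3 as [q3 q3'];
  try apply Rnot_le_lt in h1; try apply Rnot_le_lt in h2; try apply Rnot_le_lt in h3;
  unfold in_simplex, tA, tB, tC, gmap, L1; simpl;
  try rewrite (Rabs_pos_eq (r3x y)) in * by exact h1;
  try rewrite (Rabs_pos_eq (r3y y)) in * by exact h2;
  try rewrite (Rabs_pos_eq (r3z y)) in * by exact h3;
  try rewrite (Rabs_left (r3x y)) in * by lra;
  try rewrite (Rabs_left (r3y y)) in * by lra;
  try rewrite (Rabs_left (r3z y)) in * by lra;
  rewrite ?q1, ?q1', ?q2, ?q2', ?q3, ?q3';
  (split; [intros v Hv; unfold in_triangle, tA, tB, tC in Hv; simpl in Hv;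
           destruct v as [|[|[|[|[|[|v]]]]]]; try (exfalso; apply Hv; lia); try reflexivity;
           unfold Rdiv; ring|]);
  (split; [apply Rmult_le_pos; [lra| left; apply Rinv_0_lt_compat; lra]|]);
  (split; [apply Rmult_le_pos; [lra| left; apply Rinv_0_lt_compat; lra]|]);
  (split; [apply Rmult_le_pos; [lra| left; apply Rinv_0_lt_compat; lra]|]);
  field; lra.
Qed.

Lemma g_h x : realization faces x -> forall v, gmap (hmap x) v = x v.
Proof.
  intros H v. pose proof (Nn_pos x H) as HN.
  destruct (real_facts x H) as (h0&h1&h2&h3&h4&h5&p1&p2&p3&s&Hb).
  destruct (axis _ _ h0 h1 p1) as (a1&b1&c1). destruct (axis _ _ h2 h3 p2) as (a2&b2&c2).
  destruct (axis _ _ h4 h5 p3) as (a3&b3&c3).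
  assert (EL : L1 (hmap x) = / Nn x).
  { unfold L1, hmap, r3x, r3y, r3z; simpl. rewrite !(Rabs_divpos _ _ HN), a1, a2, a3.
    transitivity ((x 0%nat + x 1%nat + x 2%nat + x 3%nat + x 4%nat + x 5%nat) / Nn x).
    - field. lra.
    - rewrite s. field. lra. }
  destruct v as [|[|[|[|[|[|v]]]]]]; unfold gmap; rewrite ?EL; unfold hmap, r3x, r3y, r3z; simpl;
  rewrite ?(pos_divpos _ _ HN), ?(neg_divpos _ _ HN), ?b1, ?c1, ?b2, ?c2, ?b3, ?c3;
  try (field; lra).
  rewrite Hb by lia. reflexivity.
Qed.

Lemma h_g y : unit_sphere y -> hmap (gmap y) = y.
Proof.
  intro Hy. pose proof (L1_pos y Hy) as HL.
  destruct y as [[a b] c]. unfold unit_sphere, r3x, r3y, r3z in Hy; simpl in Hy.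
  assert (E1 : gmap (a, b, c) 0%nat - gmap (a, b, c) 1%nat = a / L1 (a, b, c))
    by (unfold gmap, pos, neg, r3x; simpl; field; lra).
  assert (E2 : gmap (a, b, c) 2%nat - gmap (a, b, c) 3%nat = b / L1 (a, b, c))
    by (unfold gmap, pos, neg, r3y; simpl; field; lra).
  assert (E3 : gmap (a, b, c) 4%nat - gmap (a, b, c) 5%nat = c / L1 (a, b, c))
    by (unfold gmap, pos, neg, r3z; simpl; field; lra).
  set (L := L1 (a, b, c)) in *.
  assert (EN : Nn (gmap (a, b, c)) = / L).
  { unfold Nn. rewrite E1, E2, E3.
    replace ((a / L) ^ 2 + (b / L) ^ 2 + (c / L) ^ 2) with ((/ L) ^ 2).
    - apply sqrt_pow2. left. apply Rinv_0_lt_compat. lra.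
    - transitivity ((a ^ 2 + b ^ 2 + c ^ 2) / L ^ 2); [replace (a ^ 2 + b ^ 2 + c ^ 2) with 1 by (rewrite <- Hy; ring)|]; field; lra. }
  unfold hmap. rewrite E1, E2, E3, EN. f_equal; [f_equal|]; field; lra.
Qed.

Lemma three_deltas {A} (d : A -> A -> R) (F1 F2 F3 : A -> R) a e :
  cont d F1 a -> cont d F2 a -> cont d F3 a -> 0 < e ->
  exists delta, 0 < delta /\ forall b, d a b < delta ->
    Rabs (F1 b - F1 a) < e /\ Rabs (F2 b - F2 a) < e /\ Rabs (F3 b - F3 a) < e.
Proof.
  intros C1 C2 C3 He.
  destruct (C1 e He) as [d1 [P1 Q1]]. destruct (C2 e He) as [d2 [P2 Q2]].
  destruct (C3 e He) as [d3 [P3 Q3]].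
  exists (Rmin d1 (Rmin d2 d3)). split.
  { apply Rmin_pos; [|apply Rmin_pos]; lra. }
  intros b Hb.
  assert (Rmin d1 (Rmin d2 d3) <= d1) by apply Rmin_l.
  assert (Rmin d1 (Rmin d2 d3) <= Rmin d2 d3) by apply Rmin_r.
  assert (Rmin d2 d3 <= d2) by apply Rmin_l.
  assert (Rmin d2 d3 <= d3) by apply Rmin_r.
  split; [apply Q1|split; [apply Q2|apply Q3]]; lra.
Qed.

Lemma h_cont x : realization faces x -> forall eps, 0 < eps -> exists delta, 0 < delta /\
  forall x', realization faces x' -> distn 6 x x' < delta -> eucl3 (hmap x) (hmap x') < eps.
Proof.
  intros H e He. pose proof (Nn_pos x H) as HN. pose proof (Nn_sq_pos x H) as HS.
  unfold Nn in HN.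
  destruct (three_deltas (distn 6) (fun z => r3x (hmap z)) (fun z => r3y (hmap z))
     (fun z => r3z (hmap z)) x (e/2)) as [dl [Hdl Hd]].
  1,2,3: unfold hmap, Nn, r3x, r3y, r3z, Rdiv; cbn [fst snd]; cont_tac; lra.
  1: lra.
  exists dl. split; [exact Hdl|]. intros x' _ Hx'.
  destruct (Hd x' Hx') as (D1 & D2 & D3).
  unfold eucl3. rewrite Rabs_minus_sym in D1, D2, D3. apply sqrt3_small; auto.
Qed.

Lemma g_cont y : unit_sphere y -> forall eps, 0 < eps -> exists delta, 0 < delta /\
  forall y', unit_sphere y' -> eucl3 y y' < delta -> distn 6 (gmap y) (gmap y') < eps.
Proof.
  intros H e He. pose proof (L1_pos y H) as HL. unfold L1 in HL.
  destruct (three_deltas eucl3 (fun z => gmap z 0%nat) (fun z => gmap z 1%nat)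
     (fun z => gmap z 2%nat) y (e/3)) as [dl [Hdl Hd]].
  1,2,3: unfold gmap, pos, neg, L1, Rdiv; cont_tac; lra.
  1: lra.
  destruct (three_deltas eucl3 (fun z => gmap z 3%nat) (fun z => gmap z 4%nat)
     (fun z => gmap z 5%nat) y (e/3)) as [dl' [Hdl' Hd']].
  1,2,3: unfold gmap, pos, neg, L1, Rdiv; cont_tac; lra.
  1: lra.
  exists (Rmin dl dl'). split; [apply Rmin_pos; lra|]. intros y' _ Hy'.
  assert (Rmin dl dl' <= dl) by apply Rmin_l.
  assert (Rmin dl dl' <= dl') by apply Rmin_r.
  destruct (Hd y' ltac:(lra)) as (D0 & D1 & D2).
  destruct (Hd' y' ltac:(lra)) as (D3 & D4 & D5).
  unfold distn. cbn [sumR].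
  rewrite Rabs_minus_sym in D0, D1, D2, D3, D4, D5. apply sqrt6_small; auto.
Qed.

Lemma sphere_ok : sphere_type 6 faces.
Proof.
  exists hmap, gmap. split; [exact h_sphere|]. split; [exact g_real|].
  split; [exact g_h|]. split; [exact h_g|]. split; [exact h_cont|]. exact g_cont.
Qed.

Definition p0 (v : nat) : R3 :=
  match v with
  | 0 => (0, 0, 0) | 1 => (0, 0, 1) | 2 => (0, 1, 0) | 3 => (0, -1, 0)
  | 4 => (-1, 1, -1) | 5 => (-1, -1, -1) | _ => (0, 0, 0) end.
Definition PP (t : R) (v : nat) : R3 := if Nat.eqb v 0 then (t, 0, t) else p0 v.

Lemma sumR3_x n F : r3x (sumR3 n F) = sumR n (fun v => r3x (F v)).
Proof. induction n; simpl; [reflexivity| rewrite <- IHn; reflexivity]. Qed.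
Lemma sumR3_y n F : r3y (sumR3 n F) = sumR n (fun v => r3y (F v)).
Proof. induction n; simpl; [reflexivity| rewrite <- IHn; reflexivity]. Qed.

Lemma tri_lemma (Ax Ay Bx By Cx Cy da db dc : R) :
  (Bx - Ax) * (Cy - Ay) - (By - Ay) * (Cx - Ax) <> 0 -> da + db + dc = 0 ->
  da * Ax + db * Bx + dc * Cx = 0 -> da * Ay + db * By + dc * Cy = 0 ->
  da = 0 /\ db = 0 /\ dc = 0.
Proof.
  intros Hd Hs Hx Hy.
  assert (E : da = - db - dc) by lra. subst da.
  assert (Hb : db * ((Bx - Ax) * (Cy - Ay) - (By - Ay) * (Cx - Ax)) = 0).
  { replace (db * ((Bx - Ax) * (Cy - Ay) - (By - Ay) * (Cx - Ax))) with
      ((Cy - Ay) * ((- db - dc) * Ax + db * Bx + dc * Cx) - (Cx - Ax) * ((- db - dc) * Ay + db * By + dc * Cy)) by ring.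
    rewrite Hx, Hy. ring. }
  assert (Hc : dc * ((Bx - Ax) * (Cy - Ay) - (By - Ay) * (Cx - Ax)) = 0).
  { replace (dc * ((Bx - Ax) * (Cy - Ay) - (By - Ay) * (Cx - Ax))) with
      ((Bx - Ax) * ((- db - dc) * Ay + db * By + dc * Cy) - (By - Ay) * ((- db - dc) * Ax + db * Bx + dc * Cx)) by ring.
    rewrite Hx, Hy. ring. }
  destruct (Rmult_integral _ _ Hb) as [E1|E1]; [|contradiction].
  destruct (Rmult_integral _ _ Hc) as [E2|E2]; [|contradiction].
  lra.
Qed.

Lemma poly_ok t : 0 <= t <= 1 -> is_polyhedron 6 faces (PP t).
Proof.
  intros Ht f Hf x y Hx Hy Heq.
  assert (EX := f_equal r3x Heq). assert (EY := f_equal r3y Heq).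
  unfold poly_map in EX, EY. rewrite !sumR3_x in EX. rewrite !sumR3_y in EY.
  cbn [sumR] in EX, EY. unfold r3scal, r3x, r3y in EX, EY. simpl in EX, EY.
  destruct Hx as (Hzx & Hx1 & Hx2 & Hx3 & Hxs). destruct Hy as (Hzy & Hy1 & Hy2 & Hy3 & Hys).
  simpl in Hf.
  repeat destruct Hf as [<-|Hf]; try contradiction;
  unfold tA, tB, tC in *; simpl in *;
  repeat (match goal with
          | H : context[x ?v] |- _ =>
             match goal with
             | H' : x v = 0 |- _ => fail 1
             | _ => assert (x v = 0) by (apply Hzx; unfold in_triangle, tA, tB, tC; simpl; lia)
             end
          end);
  repeat (match goal with
          | H : context[y ?v] |- _ =>
             match goal with
             | H' : y v = 0 |- _ => fail 1
             | _ => assert (y v = 0) by (apply Hzy; unfold in_triangle, tA, tB, tC; simpl; lia)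
             end
          end);
  idtac.
  all: match type of Hzx with
       | forall v, ~ in_triangle (?a, ?b, ?c) v -> _ =>
         pose proof (tri_lemma (r3x (PP t a)) (r3y (PP t a)) (r3x (PP t b)) (r3y (PP t b))
            (r3x (PP t c)) (r3y (PP t c)) (x a - y a) (x b - y b) (x c - y c)) as T
       end.
  all: unfold PP, p0, r3x, r3y in T; simpl in T.
  all: destruct T as (T1 & T2 & T3); [nra | lra | nra | nra |].
  all: intro v; destruct v as [|[|[|[|[|[|v]]]]]]; try lra;
       rewrite (Hzx), (Hzy) by (unfold in_triangle, tA, tB, tC; simpl; lia); reflexivity.
Qed.

Lemma ps_lin (c0 c1 x : R) :
  is_pseries (fun n => match n with 0%nat => c0 | 1%nat => c1 | _ => 0 end) x (c0 + c1*x).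
Proof.
  apply is_pseries_R. unfold is_series.
  change (is_lim_seq (sum_n (fun n => (match n with 0%nat => c0 | 1%nat => c1 | _ => 0 end) * x ^ n)) (c0 + c1*x)).
  apply (is_lim_seq_ext_loc (fun _ => c0 + c1*x)).
  - exists 1%nat. intros n Hn. induction n as [|n IH].
    + lia.
    + destruct n.
      * rewrite sum_Sn, sum_O. simpl. unfold plus; simpl. ring.
      * rewrite sum_Sn, <- IH by lia. unfold plus; simpl. ring.
  - apply is_lim_seq_const.
Qed.

Lemma analytic_lin (c0 c1 : R) : analytic_on_01 (fun t => c0 + c1 * t).
Proof.
  intros t0 _. exists 1. split; [lra|].
  exists (fun n => match n with 0%nat => c0 + c1 * t0 | 1%nat => c1 | _ => 0 end).
  intros t _ _. replace (c0 + c1 * t) with ((c0 + c1 * t0) + c1 * (t - t0)) by ring.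
  apply ps_lin.
Qed.

Lemma analytic_const (c : R) : analytic_on_01 (fun _ => c).
Proof.
  intros t0 H. destruct (analytic_lin c 0 t0 H) as [r [Hr [a Ha]]].
  exists r. split; auto. exists a. intros t H1 H2. specialize (Ha t H1 H2).
  replace c with (c + 0 * t) by ring. exact Ha.
Qed.

Lemma analytic_id : analytic_on_01 (fun t => t).
Proof.
  intros t0 H. destruct (analytic_lin 0 1 t0 H) as [r [Hr [a Ha]]].
  exists r. split; auto. exists a. intros t H1 H2. specialize (Ha t H1 H2).
  replace t with (0 + 1 * t) at 2 by ring. exact Ha.
Qed.

Lemma mink_len_eq (u w : R3) : mink_dot u u = mink_dot w w -> mink_len u = mink_len w.
Proof. intro E. unfold mink_len. rewrite E. reflexivity. Qed.

Lemma edges_ok a b : is_edge faces a b -> forall t, 0 <= t <= 1 ->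
  mink_len (r3sub (PP t a) (PP t b)) = mink_len (r3sub (PP 0 a) (PP 0 b)).
Proof.
  intros [Hab [f [Hf [Ha Hb]]]] t _. apply mink_len_eq.
  simpl in Hf.
  repeat destruct Hf as [<-|Hf]; try contradiction;
  unfold in_triangle, tA, tB, tC in Ha, Hb; simpl in Ha, Hb;
  destruct Ha as [Ea|[Ea|Ea]]; destruct Hb as [Eb|[Eb|Eb]]; subst a b; try congruence;
  unfold mink_dot, r3sub, PP, p0, r3x, r3y, r3z; simpl; ring.
Qed.

Lemma flex_ok : flexible 6 faces p0.
Proof.
  exists PP. split; [exact poly_ok|]. split.
  { intros v Hv. unfold PP, p0, r3x, r3y, r3z.
    destruct v as [|[|[|[|[|[|v]]]]]]; try lia; simpl;
    repeat split; first [apply analytic_id | apply analytic_const]. }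
  split.
  { intros v Hv. unfold PP. destruct v; reflexivity. }
  split; [exact edges_ok|].
  exists 0%nat, 1%nat. split; [lia|]. split; [lia|].
  exists 1. split; [lra|].
  unfold mink_len, mink_dot, r3sub, PP, p0, r3x, r3y, r3z; simpl.
  intro E.
  destruct (Rle_dec 0 _) as [h1|h1]; destruct (Rle_dec 0 _) as [h2|h2]; try lra;
  injection E; intros; try lra.
  - assert (sqrt ((1 - 0) * (1 - 0) + (0 - 0) * (0 - 0) - (1 - 1) * (1 - 1)) = 1) as S.
    { replace ((1 - 0) * (1 - 0) + (0 - 0) * (0 - 0) - (1 - 1) * (1 - 1)) with 1 by ring. apply sqrt_1. }
    lra.
Qed.

Lemma complex_ok : simplicial_complex2 6 faces.
Proof.
  split; [discriminate|]. split.
  - intros f Hf. simpl in Hf. repeat destruct Hf as [<-|Hf]; try contradiction;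
    unfold tA, tB, tC; simpl; lia.
  - intros v Hv. destruct v as [|[|[|[|[|[|v]]]]]]; try lia;
    [exists (0,2,4)%nat | exists (1,2,4)%nat | exists (0,2,4)%nat | exists (0,3,4)%nat
    | exists (0,2,4)%nat | exists (0,2,5)%nat];
    (split; [simpl; tauto | unfold in_triangle, tA, tB, tC; simpl; lia]).
Qed.

Theorem theorem1 :
  exists (n : nat) (faces : list tri2) (p : nat -> R3),
    simplicial_complex2 n faces /\ sphere_type n faces /\
    is_polyhedron n faces p /\ flexible n faces p.
Proof.
  exists 6%nat, faces, p0. split; [exact complex_ok|]. split; [exact sphere_ok|].
  split; [exact (poly_ok 0 ltac:(lra))|]. exact flex_ok.
Qed.
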